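(* (i) For every $k\ge2$, $\alpha\in(0,1)\cup(1,2)$ and $p\in(0,1)$ there exists $C_{1,k}^{\alpha,p}>0$ such that for all $n\in\mathbb{N}$ and $t\in\mathbb{R}$, $|R^{\alpha,p}_{n,1,k}(t)|\le C^{\alpha,p}_{1,k}|t|^k/n^{(k-\alpha)/\alpha}$. (ii) For every $\alpha\in(0,1)\cup(1,2)$ and $p\in(0,1)$ there exist $C_2^{\alpha,p}>0$ and $C_3^{\alpha,p}>0$ such that for all $n\in\mathbb{N}$ and $|t|\le C_2^{\alpha,p}n^{1/\alpha}$: $|x_n^{\alpha,p}(t)|/n\le\frac12$, and $|x_n^{\alpha,p}(t)|\le C_3^{\alpha,p}|t|^\alpha$ if $0<\alpha<1$, while $|x_n^{\alpha,p}(t)|\le C_3^{\alpha,p}|t|\,n^{(\alpha-1)/\alpha}$ if $1<\alpha<2$.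
   Context: Let $p\in(0,1)$, $q=1-p$, $r=1/q$, $\alpha>0$, and $\mathbf{f}_{\alpha,p}(t)=\sum_{k\ge1}e^{\mathrm{i}tr^{k/\alpha}}q^{k-1}p$ (the characteristic function of $X$ with $\mathsf{P}\{X=r^{k/\alpha}\}=q^{k-1}p$). Define $x_n^{\alpha,p}(t)=n(\mathbf{f}_{\alpha,p}(t/n^{1/\alpha})-1)$. Let $\gamma_n=n/r^{\lceil\log_r n\rceil}\in(q,1]$ and, for $k\ge2$, \[R^{\alpha,p}_{n,1,k}(t)=-\sum_{m=\lceil\log_rn\rceil}^\infty\Big(\exp\Big\{\frac{\mathrm{i}t}{r^{m/\alpha}\gamma_n^{1/\alpha}}\Big\}-\sum_{j=0}^{k-1}\frac{(\mathrm{i}t)^j}{j!\,r^{jm/\alpha}\gamma_n^{j/\alpha}}\Big)\frac{p\gamma_n}{q}r^m,\quad t\in\mathbb{R}.\] *)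

(* Defs.v *)
From Stdlib Require Import Reals ZArith.
From Coquelicot Require Import Coquelicot.
Open Scope R_scope.

Definition cis (th : R) : C := (cos th, sin th).

Definition CSeries (a : nat -> C) : C :=
  (Series (fun m => fst (a m)), Series (fun m => snd (a m))).

Definition Rceil (x : R) : Z := (1 - up (- x))%Z.

(* |x|^a for x >= 0 with 0^a = 0 (a > 0) *)
Definition rpow (x a : R) : R := if Req_EM_T x 0 then 0 else Rpower x a.

Definition qq (p : R) : R := 1 - p.
Definition rr (p : R) : R := / qq p.

Definition f_ap (alpha p t : R) : C :=
  CSeries (fun j => let k := S j in
    Cmult (cis (t * Rpower (rr p) (INR k / alpha))) (RtoC (qq p ^ (k - 1) * p))).

Definition x_n (alpha p : R) (n : nat) (t : R) : C :=
  Cmult (RtoC (INR n)) (Cminus (f_ap alpha p (t / Rpower (INR n) (1 / alpha))) (RtoC 1)).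

Definition mlog (p : R) (n : nat) : nat := Z.to_nat (Rceil (ln (INR n) / ln (rr p))).

Definition gamma_n (p : R) (n : nat) : R := INR n / (rr p ^ mlog p n).

Definition R_n1k (alpha p : R) (n k : nat) (t : R) : C :=
  let r := rr p in let g := gamma_n p n in
  Copp (CSeries (fun j => let m := (mlog p n + j)%nat in
    Cmult
      (Cminus (cis (t / (Rpower r (INR m / alpha) * Rpower g (1 / alpha))))
         (sum_n (fun i => Cmult (pow_n Ci i)
             (RtoC (t ^ i / (INR (fact i) * Rpower r (INR i * INR m / alpha)
                                * Rpower g (INR i / alpha))))) (k - 1)))
      (RtoC (p * g / qq p * r ^ m)))).

(* Main.v *)
Require Import Defs.
From Stdlib Require Import Reals ZArith Lra Lia.
From Coquelicot Require Import Coquelicot.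
Open Scope R_scope.

Fixpoint T (k:nat) (x:R) : C := match k with
  | O => RtoC 0
  | S k => Cplus (T k x) (Cmult (pow_n Ci k) (RtoC (x^k / INR (fact k)))) end.

Definition G k x := Cminus (cis x) (T k x).

Lemma fst_mult_R (z : C) (r : R) : fst (Cmult z (RtoC r)) = fst z * r.
Proof. destruct z; simpl; ring. Qed.
Lemma snd_mult_R (z : C) (r : R) : snd (Cmult z (RtoC r)) = snd z * r.
Proof. destruct z; simpl; ring. Qed.

Lemma pow_n_S (k:nat) : pow_n Ci (S k) = Cmult Ci (pow_n Ci k).
Proof. reflexivity. Qed.

Lemma fst_T_S k y : fst (T (S k) y) = fst (T k y) + fst (pow_n Ci k) * (y^k / INR (fact k)).
Proof. simpl T. destruct (T k y), (pow_n Ci k). simpl. ring. Qed.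
Lemma snd_T_S k y : snd (T (S k) y) = snd (T k y) + snd (pow_n Ci k) * (y^k / INR (fact k)).
Proof. simpl T. destruct (T k y), (pow_n Ci k). simpl. ring. Qed.

Lemma T_deriv k x :
  is_derive (fun y => fst (T (S k) y)) x (- snd (T k x)) /\
  is_derive (fun y => snd (T (S k) y)) x (fst (T k x)).
Proof.
  induction k as [|k [IH1 IH2]].
  - split.
    + apply is_derive_ext with (fun _ => 1).
      { intro y. rewrite fst_T_S. simpl. field. }
      simpl. auto_derive; auto; ring.
    + apply is_derive_ext with (fun _ => 0).
      { intro y. rewrite snd_T_S. simpl. field. }
      simpl. auto_derive; auto; ring.
  - split.
    + apply is_derive_ext with
        (fun y => fst (T (S k) y) + fst (pow_n Ci (S k)) * (y^(S k) / INR (fact (S k)))).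
      { intro y. rewrite (fst_T_S (S k)). reflexivity. }
      replace (- snd (T (S k) x)) with
        (- snd (T k x) + fst (pow_n Ci (S k)) * (INR (S k) * x ^ k / INR (fact (S k)))).
      2:{ rewrite snd_T_S, pow_n_S. destruct (pow_n Ci k) as [a b]. simpl fst. simpl snd.
          rewrite fact_simpl, mult_INR.
          assert (INR (fact k) <> 0) by (apply not_0_INR; apply fact_neq_0).
          assert (INR (S k) <> 0) by (apply not_0_INR; lia).
          field. split; auto. }
      apply (is_derive_plus (fun y => fst (T (S k) y))); [exact IH1|].
      apply is_derive_scal.
      auto_derive. auto. change (fact k + k * fact k)%nat with (fact (S k)). change (match k with 0%nat => 1 | S _ => INR k + 1 end) with (INR (S k)). unfold Rdiv; ring.
    + apply is_derive_ext with
        (fun y => snd (T (S k) y) + snd (pow_n Ci (S k)) * (y^(S k) / INR (fact (S k)))).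
      { intro y. rewrite (snd_T_S (S k)). reflexivity. }
      replace (fst (T (S k) x)) with
        (fst (T k x) + snd (pow_n Ci (S k)) * (INR (S k) * x ^ k / INR (fact (S k)))).
      2:{ rewrite fst_T_S, pow_n_S. destruct (pow_n Ci k) as [a b]. simpl fst. simpl snd.
          rewrite fact_simpl, mult_INR.
          assert (INR (fact k) <> 0) by (apply not_0_INR; apply fact_neq_0).
          assert (INR (S k) <> 0) by (apply not_0_INR; lia).
          field. split; auto. }
      apply (is_derive_plus (fun y => snd (T (S k) y))); [exact IH2|].
      apply is_derive_scal.
      auto_derive. auto. change (fact k + k * fact k)%nat with (fact (S k)). change (match k with 0%nat => 1 | S _ => INR k + 1 end) with (INR (S k)). unfold Rdiv; ring.
Qed.

Lemma T_S_0 k : T (S k) 0 = RtoC 1.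
Proof.
  induction k. - simpl. apply injective_projections; simpl; field.
  - change (T (S (S k)) 0) with (Cplus (T (S k) 0) (Cmult (pow_n Ci (S k)) (RtoC (0^(S k) / INR (fact (S k)))))).
    rewrite IHk. destruct (pow_n Ci (S k)).
    assert (INR (fact (S k)) <> 0) by (apply not_0_INR; apply fact_neq_0).
    apply injective_projections; simpl fst; simpl snd; unfold Rdiv; ring.
Qed.

Lemma mvt_bound (h h' : R -> R) (k : nat) :
  h 0 = 0 -> (forall c, is_derive h c (h' c)) -> (forall c, Rabs (h' c) <= Rabs c ^ k) ->
  forall x, Rabs (h x) <= Rabs x ^ S k.
Proof.
  intros H0 Hd Hb x.
  destruct (MVT_gen h 0 x h') as [c [Hc He]].
  { intros; apply Hd. }
  { intros y _. apply continuity_pt_filterlim. apply (ex_derive_continuous (K:=R_AbsRing) (V:=R_NormedModule)). eexists; apply Hd. }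
  rewrite H0, Rminus_0_r in He. rewrite Rminus_0_r in He. rewrite He, Rabs_mult. simpl.
  rewrite Rmult_comm. apply Rmult_le_compat_l. apply Rabs_pos.
  eapply Rle_trans. apply Hb. apply pow_incr. split. apply Rabs_pos.
  unfold Rmin, Rmax in Hc. destruct (Rle_dec 0 x); unfold Rabs; repeat destruct Rcase_abs; lra.
Qed.

Lemma G_bound k x : Rabs (fst (G k x)) <= Rabs x ^ k /\ Rabs (snd (G k x)) <= Rabs x ^ k.
Proof.
  revert x. induction k; intro x.
  - unfold G, cis. simpl. rewrite Ropp_0, !Rplus_0_r. split; apply Rabs_le; generalize (COS_bound x) (SIN_bound x); lra.
  - split.
    + apply (mvt_bound (fun y => fst (G (S k) y)) (fun y => - snd (G k y))).
      * unfold G. rewrite T_S_0. unfold cis. simpl. rewrite cos_0. ring.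
      * intro c. unfold G, cis. destruct (T_deriv k c) as [D1 D2].
        apply is_derive_ext with (fun y => cos y - fst (T (S k) y)).
        { intro; reflexivity. }
        replace (- snd (Cminus (cos c, sin c) (T k c))) with (- sin c - (- snd (T k c))).
        2:{ simpl. ring. }
        apply (is_derive_minus cos). apply is_derive_cos. exact D1.
      * intro c. rewrite Rabs_Ropp. apply IHk.
    + apply (mvt_bound (fun y => snd (G (S k) y)) (fun y => fst (G k y))).
      * unfold G. rewrite T_S_0. unfold cis. simpl. rewrite sin_0. ring.
      * intro c. unfold G, cis. destruct (T_deriv k c) as [D1 D2].
        apply is_derive_ext with (fun y => sin y - snd (T (S k) y)).
        { intro; reflexivity. }
        replace (fst (Cminus (cos c, sin c) (T k c))) with (cos c - fst (T k c)).
        2:{ simpl. ring. }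
        apply (is_derive_minus sin). apply is_derive_sin. exact D2.
      * intro c. apply IHk.
Qed.

Lemma Cmod_le_sum (z : C) : Cmod z <= Rabs (fst z) + Rabs (snd z).
Proof.
  destruct z as [a b]. unfold Cmod. simpl.
  assert (Ha := Rabs_pos a). assert (Hb := Rabs_pos b).
  assert (E1 : Rabs a * Rabs a = a * a) by (rewrite <- Rabs_mult; apply Rabs_pos_eq; nra).
  assert (E2 : Rabs b * Rabs b = b * b) by (rewrite <- Rabs_mult; apply Rabs_pos_eq; nra).
  rewrite <- (sqrt_pow2 (Rabs a + Rabs b)) by lra.
  apply sqrt_le_1_alt. nra.
Qed.

Lemma taylor_C (k : nat) (x : R) :
  Cmod (Cminus (cis x) (T k x)) <= 2 * Rabs x ^ k.
Proof.
  eapply Rle_trans. apply Cmod_le_sum. destruct (G_bound k x). unfold G in *. lra.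
Qed.



Lemma Series_comp_bound (c : nat -> R) (b : nat -> R) :
  (forall j, Rabs (c j) <= b j) -> ex_series b -> Rabs (Series c) <= Series b.
Proof.
  intros H Hb.
  assert (Hc : ex_series (fun n => Rabs (c n))).
  { apply (ex_series_le (K:=R_AbsRing) (V:=R_CompleteNormedModule)) with b; auto. intro n. change (norm (Rabs (c n))) with (Rabs (Rabs (c n))).
    rewrite Rabs_Rabsolu. auto. }
  eapply Rle_trans. apply Series_Rabs; auto.
  apply Series_le; auto. intro n; split; auto. apply Rabs_pos.
Qed.

Lemma im_le_Cmod' (z : C) : Rabs (snd z) <= Cmod z.
Proof. destruct z as [u v]. unfold Cmod. simpl. rewrite <- sqrt_Rsqr_abs. apply sqrt_le_1_alt.
  pose proof (Rle_0_sqr u). unfold Rsqr in *. nra. Qed.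

Lemma CSeries_bound (a : nat -> C) (b : nat -> R) :
  (forall j, Cmod (a j) <= b j) -> ex_series b -> Cmod (CSeries a) <= 2 * Series b.
Proof.
  intros H Hb. unfold CSeries.
  assert (Cmod_le_sum : forall z : C, Cmod z <= Rabs (fst z) + Rabs (snd z)).
  { intros [x y]. unfold Cmod. simpl.
    assert (Ha := Rabs_pos x). assert (Hb' := Rabs_pos y).
    assert (E1 : Rabs x * Rabs x = x * x) by (rewrite <- Rabs_mult; apply Rabs_pos_eq; nra).
    assert (E2 : Rabs y * Rabs y = y * y) by (rewrite <- Rabs_mult; apply Rabs_pos_eq; nra).
    rewrite <- (sqrt_pow2 (Rabs x + Rabs y)) by lra.
    apply sqrt_le_1_alt. nra. }
  eapply Rle_trans. apply Cmod_le_sum. simpl fst; simpl snd.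
  assert (Rabs (Series (fun m => fst (a m))) <= Series b).
  { apply Series_comp_bound; auto. intro j. eapply Rle_trans; [apply (re_le_Cmod (a j))| auto]. }
  assert (Rabs (Series (fun m => snd (a m))) <= Series b).
  { apply Series_comp_bound; auto. intro j. eapply Rle_trans; [apply im_le_Cmod'| auto]. }
  lra.
Qed.

Lemma sum_T k x (f : nat -> C) :
  (forall i, f i = Cmult (pow_n Ci i) (RtoC (x^i / INR (fact i)))) -> sum_n f k = T (S k) x.
Proof.
  intro Hf. induction k.
  - rewrite sum_O, Hf. simpl. apply injective_projections; simpl; ring.
  - rewrite sum_Sn, IHk, Hf. reflexivity.
Qed.

Lemma Rpower_pos x y : 0 < Rpower x y.
Proof. unfold Rpower. apply exp_pos. Qed.

Lemma ln_Rpower' x y : ln (Rpower x y) = y * ln x.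
Proof. unfold Rpower. apply ln_exp. Qed.

Lemma term_rewrite (t r g a : R) (m i : nat) : 0 < r -> 0 < g -> a <> 0 ->
  t ^ i / (INR (fact i) * Rpower r (INR i * INR m / a) * Rpower g (INR i / a)) =
  (t / (Rpower r (INR m / a) * Rpower g (1 / a))) ^ i / INR (fact i).
Proof.
  intros Hr Hg Ha.
  assert (E1 : Rpower r (INR i * INR m / a) = (Rpower r (INR m / a)) ^ i).
  { rewrite <- Rpower_pow by apply Rpower_pos. rewrite Rpower_mult. f_equal. field; auto. }
  assert (E2 : Rpower g (INR i / a) = (Rpower g (1 / a)) ^ i).
  { rewrite <- Rpower_pow by apply Rpower_pos. rewrite Rpower_mult. f_equal. field; auto. }
  rewrite E1, E2.
  replace ((t / (Rpower r (INR m / a) * Rpower g (1 / a))) ^ i) with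
    (t ^ i * / (Rpower r (INR m / a) ^ i * Rpower g (1 / a) ^ i)).
  2:{ unfold Rdiv. rewrite Rpow_mult_distr, pow_inv, Rpow_mult_distr. reflexivity. }
  assert (INR (fact i) <> 0) by (apply not_0_INR; apply fact_neq_0).
  assert (0 < Rpower r (INR m / a) ^ i) by (apply pow_lt; apply Rpower_pos).
  assert (0 < Rpower g (1 / a) ^ i) by (apply pow_lt; apply Rpower_pos).
  field. repeat split; lra.
Qed.

Lemma part1 : forall (k : nat) (alpha p : R),
      (2 <= k)%nat -> ((0 < alpha < 1) \/ (1 < alpha < 2)) -> 0 < p < 1 ->
      exists C1 : R, 0 < C1 /\
        forall (n : nat) (t : R), (1 <= n)%nat ->
          Cmod (R_n1k alpha p n k t)
            <= C1 * Rabs t ^ k / Rpower (INR n) ((INR k - alpha) / alpha).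
Proof.
  intros k a p Hk Ha Hp.
  assert (Ha0 : 0 < a < 2) by lra.
  assert (Hq : 0 < qq p < 1) by (unfold qq; lra).
  assert (Hr : 1 < rr p) by (unfold rr; rewrite <- Rinv_1; apply Rinv_lt_contravar; lra).
  assert (HL : 0 < ln (rr p)) by (rewrite <- ln_1; apply ln_increasing; lra).
  assert (Hk2 : 2 <= INR k) by (replace 2 with (INR 2) by (simpl; ring); apply le_INR; auto).
  set (rho := Rpower (rr p) (1 - INR k / a)).
  assert (Hrho0 : 0 < rho) by apply Rpower_pos.
  assert (Hrho1 : rho < 1).
  { unfold rho, Rpower.
    assert (1 - INR k / a < 0).
    { assert (INR k / a > 1). { apply Rlt_gt. apply (Rmult_lt_reg_r a); [lra|].
        unfold Rdiv. rewrite Rmult_assoc, Rinv_l by lra. lra. } lra. }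
    assert (X : (1 - INR k / a) * ln (rr p) < 0) by nra.
    pose proof (exp_increasing _ _ X) as X2. rewrite exp_0 in X2. exact X2. }
  exists (4 * (p / qq p) / (1 - rho)). split.
  { apply Rdiv_lt_0_compat; [|lra]. apply Rmult_lt_0_compat; [lra|]. apply Rdiv_lt_0_compat; lra. }
  intros n t Hn.
  set (r := rr p) in *.
  set (M := mlog p n). set (g := gamma_n p n).
  assert (HnR : 1 <= INR n) by (apply (le_INR 1) in Hn; simpl in Hn; lra).
  assert (HrM : 0 < r ^ M) by (apply pow_lt; lra).
  assert (Hg : 0 < g) by (unfold g, gamma_n; change (rr p) with r; change (mlog p n) with M; apply Rdiv_lt_0_compat; lra).
  assert (HnE : INR n = g * r ^ M) by (unfold g, gamma_n; change (rr p) with r; change (mlog p n) with M; field; lra).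
  set (e := (INR k - a) / a).
  set (c := Rabs t ^ k * (2 * (p / qq p)) * / Rpower (INR n) e).
  unfold R_n1k. cbv zeta. fold r. fold g. fold M. rewrite Cmod_opp.
  apply Rle_trans with (2 * Series (fun j => c * rho ^ j)).
  - apply CSeries_bound.
    + intro j. set (m := (M + j)%nat).
      set (A := Rpower r (INR m / a)). set (B := Rpower g (1 / a)).
      assert (HA : 0 < A) by apply Rpower_pos. assert (HB : 0 < B) by apply Rpower_pos.
      rewrite (sum_T (k - 1) (t / (A * B))).
      2:{ intro i. cbv beta. unfold A, B. rewrite term_rewrite; auto; lra. }
      replace (S (k - 1)) with k by lia.
      rewrite Cmod_mult, Cmod_R.
      assert (Hc0 : 0 < p * g / qq p * r ^ m).
      { apply Rmult_lt_0_compat; [|apply pow_lt; lra]. apply Rdiv_lt_0_compat; [|lra]. nra. }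
      rewrite (Rabs_pos_eq _ (Rlt_le _ _ Hc0)).
      apply Rle_trans with (2 * Rabs (t / (A * B)) ^ k * (p * g / qq p * r ^ m)).
      { apply Rmult_le_compat_r; [lra|]. apply taylor_C. }
      assert (Key : (/ (A * B)) ^ k * g * r ^ m = / Rpower (INR n) e * rho ^ j).
      { apply ln_inv.
        - apply Rmult_lt_0_compat; [|apply pow_lt; lra]. apply Rmult_lt_0_compat; [|lra].
          apply pow_lt. apply Rinv_0_lt_compat. nra.
        - apply Rmult_lt_0_compat; [|apply pow_lt; lra]. apply Rinv_0_lt_compat. apply Rpower_pos.
        - assert (HAB : 0 < / (A * B)) by (apply Rinv_0_lt_compat; nra).
          assert (Hrm : 0 < r ^ m) by (apply pow_lt; lra).
          assert (HRn : 0 < / Rpower (INR n) e) by (apply Rinv_0_lt_compat; apply Rpower_pos).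
          rewrite ln_mult by (try apply Rmult_lt_0_compat; try apply pow_lt; lra).
          rewrite ln_mult by (try apply pow_lt; lra).
          rewrite ln_mult by (try apply pow_lt; lra).
          rewrite ln_pow by lra. rewrite ln_pow by lra. rewrite ln_pow by lra.
          rewrite ln_Rinv by nra. rewrite ln_Rinv by apply Rpower_pos.
          rewrite ln_mult by lra.
          unfold A, B, rho, e. rewrite !ln_Rpower'. rewrite HnE.
          rewrite ln_mult by lra. rewrite ln_pow by lra.
          unfold m. rewrite plus_INR. field. lra. }
      right.
      replace (Rabs (t / (A * B))) with (Rabs t * / (A * B)).
      2:{ unfold Rdiv. rewrite Rabs_mult. f_equal. symmetry. apply Rabs_pos_eq. left. apply Rinv_0_lt_compat. nra. }
      rewrite Rpow_mult_distr.
      replace (c * rho ^ j) with (Rabs t ^ k * (2 * (p / qq p)) * (/ Rpower (INR n) e * rho ^ j)) by (unfold c; ring).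
      rewrite <- Key. field. lra.
    + apply (ex_series_scal_l (K:=R_AbsRing) (V:=R_NormedModule) c (fun j => rho ^ j)). apply ex_series_geom. rewrite Rabs_pos_eq; lra.
  - rewrite Series_scal_l, Series_geom by (rewrite Rabs_pos_eq; lra).
    right. unfold c. assert (0 < Rpower (INR n) e) by apply Rpower_pos. field. split; lra.
Qed.

Lemma exp_pow' a n : exp a ^ n = exp (INR n * a).
Proof. rewrite <- Rpower_pow by apply exp_pos. unfold Rpower. rewrite ln_exp. reflexivity. Qed.

Lemma ex_series_R_le (a b : nat -> R) :
  (forall n, 0 <= a n <= b n) -> ex_series b -> ex_series a.
Proof.
  intros H Hb. apply (ex_series_le (K:=R_AbsRing) (V:=R_CompleteNormedModule)) with b; auto.
  intro n. change (norm (a n)) with (Rabs (a n)). rewrite Rabs_pos_eq; apply H.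
Qed.

Lemma ex_series_geom_scal (c l : R) : 0 <= l < 1 -> ex_series (fun j => l ^ j * c).
Proof.
  intro H. apply (ex_series_ext (K:=R_AbsRing) (V:=R_NormedModule) (fun j => c * l ^ j)). { intro; simpl; ring. }
  apply (ex_series_scal_l (K:=R_AbsRing) (V:=R_NormedModule) c (fun j => l ^ j)).
  apply ex_series_geom. rewrite Rabs_pos_eq; lra.
Qed.

Lemma Series_geom_scal (c l : R) : 0 <= l < 1 -> Series (fun j => l ^ j * c) = c / (1 - l).
Proof.
  intro H. rewrite (Series_ext _ (fun j => c * l ^ j)) by (intro; ring).
  rewrite Series_scal_l, Series_geom by (rewrite Rabs_pos_eq; lra). reflexivity.
Qed.

Lemma find_K d X : 0 < d -> d <= X -> exists K : nat, (INR K + 1) * d <= X < (INR K + 2) * d.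
Proof.
  intros Hd HX. assert (H0 : 0 <= X / d - 1).
  { assert (1 <= X / d). { apply (Rmult_le_reg_r d); auto. unfold Rdiv. rewrite Rmult_assoc, Rinv_l; lra. }
    lra. }
  destruct (nfloor_ex (X / d - 1) H0) as [K [H1 H2]]. exists K.
  assert (E : X = X / d * d) by (field; lra). set (y := X / d) in *. rewrite E. split; nra.
Qed.

Definition bb (l a p u : R) (j : nat) : R :=
  Rmin 3 (2 * u * exp (l / a) ^ (S j)) * (exp (- l) ^ j * p).

Lemma bb_nonneg l a p u j : 0 <= p -> 0 <= u -> 0 <= bb l a p u j.
Proof.
  intros Hp Hu. unfold bb. apply Rmult_le_pos.
  - apply Rmin_glb; [lra|]. apply Rmult_le_pos; [lra|]. apply pow_le. left; apply exp_pos.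
  - apply Rmult_le_pos; auto. apply pow_le. left; apply exp_pos.
Qed.

Lemma bb_le3 l a p u j : 0 <= p -> bb l a p u j <= exp (- l) ^ j * (3 * p).
Proof.
  intros Hp. unfold bb.
  replace (exp (- l) ^ j * (3 * p)) with (3 * (exp (- l) ^ j * p)) by ring.
  apply Rmult_le_compat_r. apply Rmult_le_pos; auto. apply pow_le. left; apply exp_pos.
  apply Rmin_l.
Qed.

Lemma bb_le2 l a p u j : 0 <= p ->
  bb l a p u j <= (exp (l / a) * exp (- l)) ^ j * (2 * u * exp (l / a) * p).
Proof.
  intros Hp. unfold bb. rewrite Rpow_mult_distr.
  replace ((exp (l / a)) ^ j * exp (- l) ^ j * (2 * u * exp (l / a) * p)) with
    ((2 * u * exp (l / a) ^ S j) * (exp (- l) ^ j * p)) by (simpl; ring).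
  apply Rmult_le_compat_r. apply Rmult_le_pos; auto. apply pow_le. left; apply exp_pos.
  apply Rmin_r.
Qed.

Lemma ex_series_bb l a p u : 0 < l -> 0 <= p -> 0 <= u -> ex_series (bb l a p u).
Proof.
  intros Hl Hp Hu. apply ex_series_R_le with (fun j => exp (- l) ^ j * (3 * p)).
  - intro; split; [apply bb_nonneg|apply bb_le3]; auto.
  - apply ex_series_geom_scal. split. left; apply exp_pos.
    rewrite <- exp_0. apply exp_increasing. lra.
Qed.

Lemma exp_le' x y : x <= y -> exp x <= exp y.
Proof. intros [H|H]. left; apply exp_increasing; auto. subst; lra. Qed.

Lemma Series_zero (a : nat -> R) : (forall n, a n = 0) -> Series a = 0.
Proof.
  intro H. rewrite (Series_ext _ (fun n => 0 * a n)) by (intro n; rewrite H; ring).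
  rewrite Series_scal_l. ring.
Qed.

Lemma rpow_exp u a : 0 < u -> rpow u a = exp (a * ln u).
Proof. intro H. unfold rpow. destruct (Req_EM_T u 0). lra. reflexivity. Qed.

Lemma bb_small l a p u : 0 < a < 1 -> 0 < l -> p = 1 - exp (- l) -> 0 <= u ->
  Series (bb l a p u) <=
  (6 * exp l + 2 * p * exp (l / a) / (exp (l / a) * exp (- l) - 1)) * rpow u a.
Proof.
  intros Ha Hl Hp Hu.
  assert (Hq0 : 0 < exp (- l)) by apply exp_pos.
  assert (Hq1 : exp (- l) < 1) by (rewrite <- exp_0; apply exp_increasing; lra).
  assert (Hp0 : 0 < p) by lra.
  assert (Hlam : exp (l / a) * exp (- l) = exp (l / a - l)) by (rewrite <- exp_plus; f_equal; ring).
  assert (Hla : l < l / a).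
  { apply (Rmult_lt_reg_r a); [lra|]. unfold Rdiv. rewrite Rmult_assoc, Rinv_l by lra. nra. }
  assert (Hlam1 : 1 < exp (l / a) * exp (- l)) by (rewrite Hlam, <- exp_0; apply exp_increasing; lra).
  assert (Hrho : 0 < exp (l / a)) by apply exp_pos.
  assert (HK2 : 0 < 2 * p * exp (l / a) / (exp (l / a) * exp (- l) - 1)).
  { apply Rdiv_lt_0_compat; [|lra]. nra. }
  assert (Hel : exp l * exp (- l) = 1) by (rewrite <- exp_plus; replace (l + - l) with 0 by ring; apply exp_0).
  destruct Hu as [Hu|Hu].
  2:{ subst u. rewrite Series_zero. unfold rpow. destruct (Req_EM_T 0 0); [|lra]. lra.
      intro n. unfold bb. rewrite Rmult_0_r, Rmult_0_l. unfold Rmin. destruct (Rle_dec 3 0); [lra|]. ring. }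
  rewrite rpow_exp by auto.
  set (U := ln u). assert (HuU : u = exp U) by (unfold U; rewrite exp_ln; auto).
  assert (HeaU : 0 < exp (a * U)) by apply exp_pos.
  assert (Hal : a * (l / a) = l) by (field; lra).
  destruct (Rle_or_lt (U + l / a) 0) as [HB|HA].
  -
    destruct (find_K (l / a) (- U)) as [K [HK1 HK2']]; [lra|lra|].
    rewrite (Series_incr_n _ (S K)) by (auto with arith; apply ex_series_bb; lra).
    simpl pred.
    set (lam := exp (l / a) * exp (- l)) in *.
    set (d := l / a) in *.
    
    assert (S1 : sum_f_R0 (bb l a p u) K <= 2 * p * exp d / (lam - 1) * exp (a * U)).
    { apply Rle_trans with (sum_f_R0 (fun j => lam ^ j * (2 * u * exp d * p)) K).
      { apply sum_Rle; intros; apply bb_le2; lra. }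
      rewrite <- scal_sum, tech3 by lra.
      assert (Hkey : u * lam ^ S K <= exp (a * U)).
      { rewrite HuU. rewrite Hlam, exp_pow', <- exp_plus. apply exp_le'.
        rewrite S_INR. assert (E1 : (INR K + 1) * l = a * ((INR K + 1) * d)) by (rewrite <- Hal; ring).
        assert (0 <= INR K) by apply pos_INR. nra. }
      replace (2 * u * exp d * p * ((1 - lam ^ S K) / (1 - lam))) with
        (2 * p * exp d / (lam - 1) * (u * lam ^ S K - u)) by (field; lra).
      apply Rmult_le_compat_l; [left; auto|lra]. }
    assert (S2 : Series (fun k => bb l a p u (S K + k)) <= 3 * exp l * exp (a * U)).
    { apply Rle_trans with (Series (fun k => exp (- l) ^ k * (3 * p * exp (- l) ^ S K))).
      { apply Series_le.
        - intro k. split. apply bb_nonneg; lra. eapply Rle_trans. apply bb_le3; lra.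
          rewrite pow_add. right; ring.
        - apply ex_series_geom_scal; lra. }
      rewrite Series_geom_scal by lra.
      replace (3 * p * exp (- l) ^ S K / (1 - exp (- l))) with (3 * exp (- l) ^ S K) by (rewrite Hp; field; lra).
      rewrite Rmult_assoc. apply Rmult_le_compat_l; [lra|].
      rewrite exp_pow', <- exp_plus. apply exp_le'. rewrite S_INR.
      assert (E1 : (INR K + 2) * l = a * ((INR K + 2) * d)) by (rewrite <- Hal; ring).
      nra. }
    assert (0 < exp l) by apply exp_pos.
    nra.
  -
    apply Rle_trans with (Series (fun j => exp (- l) ^ j * (3 * p))).
    { apply Series_le. intro; split; [apply bb_nonneg|apply bb_le3]; lra.
      apply ex_series_geom_scal; lra. }
    rewrite Series_geom_scal by lra.
    replace (3 * p / (1 - exp (- l))) with 3 by (rewrite Hp; field; lra).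
    assert (exp (- l) <= exp (a * U)) by (apply exp_le'; nra).
    assert (6 * exp l * exp (a * U) >= 6). { assert (exp l * exp (a * U) >= exp l * exp (-l)).
      apply Rle_ge. apply Rmult_le_compat_l; [left; apply exp_pos|auto]. nra. }
    nra.
Qed.

Lemma bb_large l a p u : 1 < a -> 0 < l -> 0 <= p -> 0 <= u ->
  Series (bb l a p u) <= (2 * exp (l / a) * p / (1 - exp (l / a) * exp (- l))) * u.
Proof.
  intros Ha Hl Hp Hu.
  assert (Hlam : exp (l / a) * exp (- l) = exp (l / a - l)) by (rewrite <- exp_plus; f_equal; ring).
  assert (Hla : l / a < l).
  { apply (Rmult_lt_reg_r a); [lra|]. unfold Rdiv. rewrite Rmult_assoc, Rinv_l by lra. nra. }
  assert (Hlam1 : exp (l / a) * exp (- l) < 1) by (rewrite Hlam, <- exp_0; apply exp_increasing; lra).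
  assert (Hlam0 : 0 < exp (l / a) * exp (- l)) by (apply Rmult_lt_0_compat; apply exp_pos).
  apply Rle_trans with (Series (fun j => (exp (l / a) * exp (- l)) ^ j * (2 * u * exp (l / a) * p))).
  { apply Series_le. intro; split; [apply bb_nonneg|apply bb_le2]; lra.
    apply ex_series_geom_scal; lra. }
  rewrite Series_geom_scal by lra. right. field. lra.
Qed.

Lemma Cmod_cis x : Cmod (cis x) = 1.
Proof. unfold Cmod, cis. simpl. rewrite !Rmult_1_r.
  replace (cos x * cos x + sin x * sin x) with 1. apply sqrt_1.
  rewrite <- (sin2_cos2 x). unfold Rsqr. ring. Qed.

Lemma T1 y : T 1 y = RtoC 1.
Proof. simpl. apply injective_projections; simpl; field. Qed.

Lemma cis_minus_1 y : Cmod (Cminus (cis y) (RtoC 1)) <= Rmin 3 (2 * Rabs y).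
Proof.
  apply Rmin_glb.
  - unfold Cminus. eapply Rle_trans. apply Cmod_triangle. rewrite Cmod_opp, Cmod_cis, Cmod_1. lra.
  - rewrite <- (T1 y). eapply Rle_trans. apply taylor_C. simpl. lra.
Qed.

Lemma f_bound a p s : a <> 0 -> 0 < p < 1 ->
  Cmod (Cminus (f_ap a p s) (RtoC 1)) <= 2 * Series (bb (ln (rr p)) a p (Rabs s)).
Proof.
  intros Ha Hp.
  set (l := ln (rr p)).
  assert (Hq : 0 < qq p < 1) by (unfold qq; lra).
  assert (Hql : exp (- l) = qq p).
  { unfold l, rr. rewrite ln_Rinv by lra. rewrite Ropp_involutive. apply exp_ln. lra. }
  assert (Hr : 0 < rr p) by (unfold rr; apply Rinv_0_lt_compat; lra).
  set (a0 := fun j : nat => Cmult (cis (s * Rpower (rr p) (INR (S j) / a))) (RtoC (qq p ^ (S j - 1) * p))).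
  assert (Ha0 : forall j, Cmod (a0 j) = qq p ^ j * p).
  { intro j. unfold a0. rewrite Cmod_mult, Cmod_cis, Cmod_R. replace (S j - 1)%nat with j by lia.
    rewrite Rabs_pos_eq. ring. apply Rmult_le_pos; [apply pow_le|]; lra. }
  assert (Hgeo : ex_series (fun j => qq p ^ j * p)) by (apply ex_series_geom_scal; lra).
  assert (Hfst : ex_series (fun j => fst (a0 j))).
  { apply (ex_series_le (K:=R_AbsRing) (V:=R_CompleteNormedModule)) with (fun j => qq p ^ j * p); auto.
    intro n. change (norm (fst (a0 n))) with (Rabs (fst (a0 n))). rewrite <- Ha0. apply re_le_Cmod. }
  assert (E : Cminus (f_ap a p s) (RtoC 1) = CSeries (fun j => Cminus (a0 j) (RtoC (qq p ^ j * p)))).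
  { unfold f_ap, CSeries. fold a0. apply injective_projections; unfold Cminus, Cplus, Copp, RtoC; cbn [fst snd].
    - symmetry. rewrite (Series_ext _ (fun m => fst (a0 m) - qq p ^ m * p)) by (intro; unfold Rminus; reflexivity).
      rewrite Series_minus by auto. rewrite Series_geom_scal by lra.
      replace (p / (1 - qq p)) with 1 by (unfold qq; field; lra). unfold a0, Rminus. reflexivity.
    - rewrite !Ropp_0, Rplus_0_r. apply Series_ext. intro. rewrite !Rplus_0_r. reflexivity. }
  rewrite E. apply CSeries_bound.
  2:{ apply ex_series_bb. unfold l. rewrite <- ln_1. apply ln_increasing; [lra|].
      unfold rr. rewrite <- Rinv_1. apply Rinv_lt_contravar; lra. lra. apply Rabs_pos. }
  intro j.
  replace (Cminus (a0 j) (RtoC (qq p ^ j * p))) with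
     (Cmult (Cminus (cis (s * Rpower (rr p) (INR (S j) / a))) (RtoC 1)) (RtoC (qq p ^ j * p))).
  2:{ unfold a0. replace (S j - 1)%nat with j by lia.
      apply injective_projections; simpl; ring. }
  rewrite Cmod_mult, Cmod_R, Rabs_pos_eq by (apply Rmult_le_pos; [apply pow_le|]; lra).
  unfold bb. rewrite Hql. apply Rmult_le_compat_r. apply Rmult_le_pos; [apply pow_le|]; lra.
  eapply Rle_trans. apply cis_minus_1.
  right. f_equal. rewrite Rabs_mult, (Rabs_pos_eq (Rpower _ _)) by (left; apply Rpower_pos).
  rewrite exp_pow'. unfold Rpower. fold l. replace (INR (S j) / a * l) with (INR (S j) * (l / a)) by (field; auto). ring.
Qed.

Lemma Cmod_x_n a p n t : Cmod (x_n a p n t) =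
  INR n * Cmod (Cminus (f_ap a p (t / Rpower (INR n) (1 / a))) (RtoC 1)).
Proof. unfold x_n. rewrite Cmod_mult, Cmod_R, Rabs_pos_eq by apply pos_INR. reflexivity. Qed.

Lemma rpow_scale a n t : 0 < a -> 1 <= INR n ->
  INR n * rpow (Rabs (t / Rpower (INR n) (1 / a))) a = rpow (Rabs t) a.
Proof.
  intros Ha Hn. assert (HN : 0 < Rpower (INR n) (1 / a)) by apply Rpower_pos.
  destruct (Req_dec t 0) as [->|Ht].
  - unfold Rdiv. rewrite Rmult_0_l, Rabs_R0. unfold rpow. destruct (Req_EM_T 0 0); [ring|lra].
  - assert (Hs : 0 < Rabs (t / Rpower (INR n) (1 / a))).
    { apply Rabs_pos_lt. unfold Rdiv. apply Rmult_integral_contrapositive. split; auto.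
      apply Rinv_neq_0_compat. lra. }
    assert (Ht' : 0 < Rabs t) by (apply Rabs_pos_lt; auto).
    rewrite !rpow_exp by auto.
    rewrite Rabs_div by lra. rewrite (Rabs_pos_eq (Rpower _ _)) by lra.
    unfold Rdiv. rewrite ln_mult, ln_Rinv by (try apply Rinv_0_lt_compat; lra).
    rewrite ln_Rpower'.
    replace (a * (ln (Rabs t) + - (1 * / a * ln (INR n)))) with (a * ln (Rabs t) + - ln (INR n)) by (field; lra).
    rewrite exp_plus, exp_Ropp, exp_ln by lra. field. lra.
Qed.

Lemma part2 : forall alpha p : R,
      ((0 < alpha < 1) \/ (1 < alpha < 2)) -> 0 < p < 1 ->
      exists C2 C3 : R, 0 < C2 /\ 0 < C3 /\
        forall (n : nat) (t : R), (1 <= n)%nat ->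
          Rabs t <= C2 * Rpower (INR n) (1 / alpha) ->
          Cmod (x_n alpha p n t) / INR n <= 1 / 2 /\
          (0 < alpha < 1 -> Cmod (x_n alpha p n t) <= C3 * rpow (Rabs t) alpha) /\
          (1 < alpha < 2 ->
             Cmod (x_n alpha p n t) <= C3 * Rabs t * Rpower (INR n) ((alpha - 1) / alpha)).
Proof.
  intros a p Ha Hp.
  set (l := ln (rr p)).
  assert (Hq : 0 < qq p < 1) by (unfold qq; lra).
  assert (Hql : exp (- l) = qq p).
  { unfold l, rr. rewrite ln_Rinv by lra. rewrite Ropp_involutive. apply exp_ln. lra. }
  assert (Hl : 0 < l).
  { unfold l. rewrite <- ln_1. apply ln_increasing; [lra|].
    unfold rr. rewrite <- Rinv_1. apply Rinv_lt_contravar; lra. }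
  assert (Hpl : p = 1 - exp (- l)) by (rewrite Hql; unfold qq; ring).
  assert (Ha0 : a <> 0) by lra.
  destruct Ha as [Ha|Ha].
  - set (K0 := 6 * exp l + 2 * p * exp (l / a) / (exp (l / a) * exp (- l) - 1)).
    assert (HK0 : 0 < K0).
    { unfold K0. assert (Hla : l < l / a).
      { apply (Rmult_lt_reg_r a); [lra|]. unfold Rdiv. rewrite Rmult_assoc, Rinv_l by lra. nra. }
      assert (1 < exp (l / a) * exp (- l)).
      { rewrite <- exp_plus, <- exp_0. apply exp_increasing. lra. }
      assert (0 < exp l) by apply exp_pos. assert (0 < exp (l / a)) by apply exp_pos.
      assert (0 < 2 * p * exp (l / a) / (exp (l / a) * exp (- l) - 1)).
      { apply Rdiv_lt_0_compat; [|lra]. nra. } lra. }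
    assert (Hf : forall s, Cmod (Cminus (f_ap a p s) (RtoC 1)) <= 2 * K0 * rpow (Rabs s) a).
    { intro s. eapply Rle_trans. apply f_bound; auto.
      rewrite Rmult_assoc. apply Rmult_le_compat_l; [lra|]. apply bb_small; auto. apply Rabs_pos. }
    exists (Rpower (1 / (4 * K0)) (1 / a)), (2 * K0). split; [apply Rpower_pos|]. split; [lra|].
    intros n t Hn Ht.
    assert (HnR : 1 <= INR n) by (apply (le_INR 1) in Hn; simpl in Hn; lra).
    assert (HN : 0 < Rpower (INR n) (1 / a)) by apply Rpower_pos.
    set (s := t / Rpower (INR n) (1 / a)).
    assert (Hs : Rabs s <= Rpower (1 / (4 * K0)) (1 / a)).
    { unfold s. rewrite Rabs_div by lra. rewrite (Rabs_pos_eq (Rpower _ _)) by lra.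
      apply (Rmult_le_reg_r (Rpower (INR n) (1 / a))); auto. unfold Rdiv.
      rewrite Rmult_assoc, Rinv_l by lra. lra. }
    assert (Hrs : rpow (Rabs s) a <= 1 / (4 * K0)).
    { destruct (Req_dec (Rabs s) 0) as [E|E].
      - rewrite E. unfold rpow. destruct (Req_EM_T 0 0); [|lra].
        left. apply Rdiv_lt_0_compat; lra.
      - unfold rpow. destruct (Req_EM_T (Rabs s) 0); [lra|].
        apply Rle_trans with (Rpower (Rpower (1 / (4 * K0)) (1 / a)) a).
        + apply Rle_Rpower_l; [lra|]. split; auto. pose proof (Rabs_pos s). lra.
        + rewrite Rpower_mult. replace (1 / a * a) with 1 by (field; lra).
          rewrite Rpower_1. lra. apply Rdiv_lt_0_compat; lra. }
    rewrite Cmod_x_n. fold s. split; [|split].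
    + replace (INR n * Cmod (Cminus (f_ap a p s) 1) / INR n) with (Cmod (Cminus (f_ap a p s) 1)) by (field; lra).
      eapply Rle_trans. apply Hf.
      apply Rle_trans with (2 * K0 * (1 / (4 * K0))). apply Rmult_le_compat_l; lra.
      right. field. lra.
    + intros _. rewrite <- (rpow_scale a n t) by lra. fold s.
      apply Rle_trans with (INR n * (2 * K0 * rpow (Rabs s) a)).
      apply Rmult_le_compat_l; [lra|apply Hf]. right; ring.
    + intros; lra.
  - set (K1 := 2 * exp (l / a) * p / (1 - exp (l / a) * exp (- l))).
    assert (HK1 : 0 < K1).
    { unfold K1. assert (Hla : l / a < l).
      { apply (Rmult_lt_reg_r a); [lra|]. unfold Rdiv. rewrite Rmult_assoc, Rinv_l by lra. nra. }
      assert (exp (l / a) * exp (- l) < 1).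
      { rewrite <- exp_plus, <- exp_0. apply exp_increasing. lra. }
      assert (0 < exp (l / a)) by apply exp_pos.
      apply Rdiv_lt_0_compat; [|lra]. nra. }
    assert (Hf : forall s, Cmod (Cminus (f_ap a p s) (RtoC 1)) <= 2 * K1 * Rabs s).
    { intro s. eapply Rle_trans. apply f_bound; auto.
      rewrite Rmult_assoc. apply Rmult_le_compat_l; [lra|]. apply bb_large; auto; try lra. apply Rabs_pos. }
    exists (1 / (4 * K1)), (2 * K1). split; [apply Rdiv_lt_0_compat; lra|]. split; [lra|].
    intros n t Hn Ht.
    assert (HnR : 1 <= INR n) by (apply (le_INR 1) in Hn; simpl in Hn; lra).
    assert (HN : 0 < Rpower (INR n) (1 / a)) by apply Rpower_pos.
    set (s := t / Rpower (INR n) (1 / a)).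
    assert (Hs : Rabs s = Rabs t / Rpower (INR n) (1 / a)).
    { unfold s. rewrite Rabs_div by lra. rewrite (Rabs_pos_eq (Rpower _ _)) by lra. reflexivity. }
    assert (Hs2 : Rabs s <= 1 / (4 * K1)).
    { rewrite Hs. apply (Rmult_le_reg_r (Rpower (INR n) (1 / a))); auto. unfold Rdiv.
      rewrite Rmult_assoc, Rinv_l by lra. lra. }
    rewrite Cmod_x_n. fold s. split; [|split].
    + replace (INR n * Cmod (Cminus (f_ap a p s) 1) / INR n) with (Cmod (Cminus (f_ap a p s) 1)) by (field; lra).
      eapply Rle_trans. apply Hf.
      apply Rle_trans with (2 * K1 * (1 / (4 * K1))). apply Rmult_le_compat_l; lra.
      right. field. lra.
    + intros; lra.
    + intros _.
      apply Rle_trans with (INR n * (2 * K1 * Rabs s)).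
      apply Rmult_le_compat_l; [lra|apply Hf].
      assert (En : Rpower (INR n) ((a - 1) / a) * Rpower (INR n) (1 / a) = INR n).
      { rewrite <- Rpower_plus. replace ((a - 1) / a + 1 / a) with 1 by (field; lra).
        apply Rpower_1. lra. }
      rewrite Hs. right. rewrite <- En at 1. field. lra.
Qed.

Theorem lemma3 :
  (forall (k : nat) (alpha p : R),
      (2 <= k)%nat -> ((0 < alpha < 1) \/ (1 < alpha < 2)) -> 0 < p < 1 ->
      exists C1 : R, 0 < C1 /\
        forall (n : nat) (t : R), (1 <= n)%nat ->
          Cmod (R_n1k alpha p n k t)
            <= C1 * Rabs t ^ k / Rpower (INR n) ((INR k - alpha) / alpha))
  /\
  (forall alpha p : R,
      ((0 < alpha < 1) \/ (1 < alpha < 2)) -> 0 < p < 1 ->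
      exists C2 C3 : R, 0 < C2 /\ 0 < C3 /\
        forall (n : nat) (t : R), (1 <= n)%nat ->
          Rabs t <= C2 * Rpower (INR n) (1 / alpha) ->
          Cmod (x_n alpha p n t) / INR n <= 1 / 2 /\
          (0 < alpha < 1 -> Cmod (x_n alpha p n t) <= C3 * rpow (Rabs t) alpha) /\
          (1 < alpha < 2 ->
             Cmod (x_n alpha p n t) <= C3 * Rabs t * Rpower (INR n) ((alpha - 1) / alpha))).
Proof. split. exact part1. exact part2. Qed.
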